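(* For every positive integer $n$: (1) the accessible subset-construction determinization of the underlying automaton of $\mathcal{T}_n$ has exactly $3$ states; (2) the accessible subset-construction determinization of the reversed underlying automaton of $\mathcal{T}_n$ has exactly $2^n+n$ states.
   Context: Let $\Sigma_n=\{a_1,\dots,a_n\}$, output monoid the free monoid $\{1\}^*$. $\mathcal{T}_n=\langle\Sigma_n^*\times\{1\}^*,Q,\{s\},\{f\},\Delta_n\rangle$ with $Q=\{s,q_1,\dots,q_n,f\}$ and $\Delta_n=\Delta_{s,n}\cup\Delta_{Q_n}\cup\Delta_{f,n}$ where: $\Delta_{s,n}=\{\langle s,\langle a_j,1^{i-1}\rangle,q_i\rangle:1\le i,j\le n\}$; $\Delta_{Q_n}$ consists, for all $1\le i,j\le n$, of $\langle q_i,\langle a_j,1^n\rangle,q_i\rangle$ if $i\notin\{1,j\}$, $\langle q_1,\langle a_j,1^{n+j-1}\rangle,q_j\rangle$ if $i=1$, and $\langle q_j,\langle a_j,1^{n-j+1}\rangle,q_1\rangle$ if $i=j\neq1$; $\Delta_{f,n}=\{\langle q_i,\langle a_j,1^{2n-i+1}\rangle,f\rangle:1\le j\le i\le n\}$. The underlying automaton of $\mathcal{T}_n$ is the nondeterministic automaton over $\Sigma_n$ with states $Q$, initial state $s$, final state $f$ and a transition $\langle p,a,q\rangle$ for each $\langle p,\langle a,w\rangle,q\rangle\in\Delta_n$; the reversed underlying automaton has initial state $f$, final state $s$ and all transitions reversed. The accessible subset-construction determinization has as states exactly the subsets reachable from the set of initial states via $\delta(P,a)=\{q:\exists p\in P\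 \langle p,a,q\rangle\}$. *)

(* Defs.v *)
From mathcomp Require Import all_boot.
Set Implicit Arguments. Unset Strict Implicit. Unset Printing Implicit Defensive.

(* Encoding of T_n:
   - letter a_j of Sigma_n is encoded by the natural number j (1 <= j <= n);
   - an output word 1^k of the free monoid {1}^* is encoded by its length k;
   - state s is encoded by 0, state q_i by i (1 <= i <= n), state f by n+1.
   A transducer transition <p,<a_j,1^k>,q> is the triple ((p,(j,k)),q). *)

Definition st_s : nat := 0.
Definition st_q (i : nat) : nat := i.
Definition st_f (n : nat) : nat := n.+1.

Definition Delta_s (n : nat) : seq (nat * (nat * nat) * nat) :=
  [seq (st_s, (j, i.-1), st_q i) | i <- iota 1 n, j <- iota 1 n].

Definition Delta_Q (n : nat) : seq (nat * (nat * nat) * nat) :=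
  flatten [seq [seq
      (if i == 1 then (st_q 1, (j, n + j - 1), st_q j)
       else if i == j then (st_q j, (j, n - j + 1), st_q 1)
       else (st_q i, (j, n), st_q i))
    | j <- iota 1 n] | i <- iota 1 n].

Definition Delta_f (n : nat) : seq (nat * (nat * nat) * nat) :=
  [seq (st_q i, (j, 2 * n - i + 1), st_f n)
  | i <- iota 1 n, j <- [seq j <- iota 1 n | j <= i]].

Definition Delta (n : nat) := Delta_s n ++ Delta_Q n ++ Delta_f n.

Definition underlying (D : seq (nat * (nat * nat) * nat)) : seq (nat * nat * nat) :=
  [seq (t.1.1, t.1.2.1, t.2) | t <- D].

Definition reverse_trans (A : seq (nat * nat * nat)) : seq (nat * nat * nat) :=
  [seq (t.2, t.1.2, t.1.1) | t <- A].

Definition delta (m : nat) (A : seq (nat * nat * nat)) (P : {set 'I_m}) (a : nat)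
  : {set 'I_m} :=
  [set q : 'I_m | [exists p in P, (nat_of_ord p, a, nat_of_ord q) \in A]].

Definition accessible (m n : nat) (A : seq (nat * nat * nat)) (I : {set 'I_m})
  (P : {set 'I_m}) : Prop :=
  exists w : seq nat, all (fun a => (1 <= a <= n)) w /\ P = foldl (delta A) I w.

Definition num_det_states (m n : nat) (A : seq (nat * nat * nat)) (I : {set 'I_m})
  (k : nat) : Prop :=
  exists S : {set {set 'I_m}},
    (forall P, P \in S <-> accessible n A I P) /\ #|S| = k.

Definition init_s (n : nat) : {set 'I_n.+2} := [set (inord st_s : 'I_n.+2)].
Definition init_f (n : nat) : {set 'I_n.+2} := [set (inord (st_f n) : 'I_n.+2)].

(* Main.v *)
Require Import Defs.
From mathcomp Require Import all_boot zify.
Set Implicit Arguments. Unset Strict Implicit.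
Definition swap (a p : nat) := if p == 1 then a else if p == a then 1 else p.
Definition trans n p a q : bool := (1 <= a <= n) && [|| (p == 0) && (1 <= q <= n),
  [&& 1 <= p <= n & q == swap a p] | [&& 1 <= p <= n, a <= p & q == n.+1]].

Lemma mem_s n p a q : ((p,a,q) \in underlying (Delta_s n)) = [&& 1 <= a <= n, p == 0 & 1 <= q <= n].
Proof.
apply/mapP/idP.
  case=> t /allpairsP [[i j] [/= hi hj ->]] [-> -> ->] /=.
  by move: hi hj; rewrite !mem_iota /st_s /st_q; lia.
move=> h; exists (st_s, (a, q.-1), st_q q); last by rewrite /= /st_s /st_q; congr (_,_,_); lia.
apply/allpairsP; exists (q, a); rewrite !mem_iota /=; split; [lia|lia|done].
Qed.

Lemma mem_Q n p a q : ((p,a,q) \in underlying (Delta_Q n)) = [&& 1 <= a <= n, 1 <= p <= n & q == swap a p].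
Proof.
apply/mapP/idP.
  case=> t /allpairsP [[i j] [/= hi hj ->]] [-> -> ->] /=.
  move: hi hj; rewrite !mem_iota /st_q /swap; do ! case: ifP => /=; lia.
move=> h; exists (if p == 1 then (st_q 1, (a, n + a - 1), st_q a)
       else if p == a then (st_q a, (a, n - a + 1), st_q 1)
       else (st_q p, (a, n), st_q p)).
  apply/allpairsP; exists (p, a); rewrite !mem_iota /=; split; [lia|lia|done].
move: h; rewrite /st_q /swap; do ! case: ifP => /=; try lia; move=> *; congr (_,_,_); lia.
Qed.

Lemma mem_f n p a q : ((p,a,q) \in underlying (Delta_f n)) = [&& 1 <= a <= n, 1 <= p <= n, a <= p & q == n.+1].
Proof.
apply/mapP/idP.
  case=> t /allpairsPdep [i [j [hi hj ->]]] [-> -> ->] /=.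
  by move: hi hj; rewrite mem_filter !mem_iota /st_q /st_f; lia.
move=> h; exists (st_q p, (a, 2 * n - p + 1), st_f n); last by rewrite /= /st_f /st_q; congr (_,_,_); lia.
apply/allpairsPdep; exists p, a; rewrite mem_filter !mem_iota /=; split; [lia|lia|done].
Qed.

Lemma mem_under n p a q : ((p,a,q) \in underlying (Delta n)) = trans n p a q.
Proof.
rewrite /underlying /Delta !map_cat !mem_cat -!/(underlying _) mem_s mem_Q mem_f /trans.
apply/idP/idP; lia.
Qed.

Lemma mem_rev A p a q : ((p,a,q) \in reverse_trans A) = ((q,a,p) \in A).
Proof.
apply/mapP/idP.
  by case=> [[[x y] z]] h [-> -> ->].
by move=> h; exists (q,a,p).
Qed.

Lemma swapK a q : swap a (swap a q) = q.
Proof. rewrite /swap; do ! case: ifP; lia. Qed.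

Lemma swap_rng n a q : 1 <= a <= n -> 1 <= q <= n -> 1 <= swap a q <= n.
Proof. rewrite /swap; do ! case: ifP; lia. Qed.

Definition A1 n := underlying (Delta n).
Definition A2 n := reverse_trans (underlying (Delta n)).

Lemma mem_delta1 n (P : {set 'I_n.+2}) a q :
  (q \in delta (A1 n) P a) = [exists p in P, trans n p a q].
Proof. by rewrite inE; apply: eq_existsb => p; rewrite /A1 mem_under. Qed.

Lemma mem_delta2 n (P : {set 'I_n.+2}) a q :
  (q \in delta (A2 n) P a) = [exists p in P, trans n q a p].
Proof. by rewrite inE; apply: eq_existsb => p; rewrite /A2 mem_rev mem_under. Qed.

Lemma ex_val m (X : {set 'I_m.+1}) k : k < m.+1 ->
  [exists p in X, val p == k] = (inord k \in X).
Proof.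
move=> hk; apply/existsP/idP => [[p /andP[hp /eqP <-]] | h]; first by rewrite inord_val.
by exists (inord k); rewrite h /= inordK ?eqxx.
Qed.

Lemma eq_inord m (q : 'I_m.+1) k : k < m.+1 -> (q == inord k) = (nat_of_ord q == k).
Proof. by move=> hk; rewrite -(inj_eq val_inj) /= inordK. Qed.

Definition QQ n : {set 'I_n.+2} := [set q : 'I_n.+2 | 1 <= q <= n].
Definition QF n : {set 'I_n.+2} := [set q : 'I_n.+2 | 1 <= q <= n.+1].

Lemma d1_s n a : 1 <= a <= n -> delta (A1 n) (init_s n) a = QQ n.
Proof.
move=> ha; apply/setP => q; rewrite mem_delta1 inE.
apply/existsP/idP => [[p /andP[/set1P -> h]] | h].
  by move: h; rewrite /trans /st_s inordK //; lia.
by exists (inord 0); rewrite /init_s /st_s inE eqxx /= /trans inordK //; lia.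
Qed.

Lemma d1_Q n a (P : {set 'I_n.+2}) : 1 <= a <= n -> P = QQ n \/ P = QF n ->
  delta (A1 n) P a = QF n.
Proof.
move=> ha hP; apply/setP => q; rewrite mem_delta1 inE.
have hq := ltn_ord q.
apply/existsP/idP => [[p /andP[hp]] | h].
  have : p \in QF n by case: hP hp => ->; rewrite !inE //; lia.
  rewrite inE /trans /swap => hp'; do ! case: ifP; lia.
case: (boolP (nat_of_ord q == n.+1)) => hqn.
  exists (inord n); rewrite /trans inordK //.
  have -> : inord n \in P by case: hP => ->; rewrite !inE inordK //; lia.
  by lia.
exists (inord (swap a q)); have hs : 1 <= swap a q <= n by apply: swap_rng; lia.
rewrite /trans inordK; last by lia.
have -> : inord (swap a q) \in P by case: hP => ->; rewrite !inE inordK //; lia.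
by rewrite swapK /=; lia.
Qed.

Lemma card_QQ n : #|QQ n| = n.
Proof.
have -> : QQ n = ~: [set inord 0; inord n.+1].
  apply/setP => q; rewrite !inE !eq_inord //; have := ltn_ord q; lia.
have := cardsC [set (inord 0 : 'I_n.+2); inord n.+1].
rewrite cards2 card_ord eq_inord // inordK //= => h; by apply/eqP; rewrite -(eqn_add2l 2) h add2n.
Qed.

Lemma foldl_closed m n A (X : {set {set 'I_m}}) :
  (forall I a, 1 <= a <= n -> I \in X -> delta A I a \in X) ->
  forall w I, all (fun a => 1 <= a <= n) w -> I \in X -> foldl (delta A) I w \in X.
Proof. by move=> cl; elim=> [|a w IH] I //= /andP[ha hw] hI; apply: IH => //; apply: cl. Qed.

Lemma part1 n : 0 < n -> num_det_states n (underlying (Delta n)) (init_s n) 3.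
Proof.
move=> hn.
have s_in : (inord 0 : 'I_n.+2) \in init_s n by rewrite inE.
have s_nQ : (inord 0 : 'I_n.+2) \notin QQ n by rewrite inE inordK.
have s_nF : (inord 0 : 'I_n.+2) \notin QF n by rewrite inE inordK.
have f_F : (inord n.+1 : 'I_n.+2) \in QF n by rewrite inE inordK //; lia.
have f_nQ : (inord n.+1 : 'I_n.+2) \notin QQ n by rewrite inE inordK //; lia.
exists [set init_s n; QQ n; QF n]; split.
  move=> P; split.
    rewrite !inE => /orP[/orP[]|] /eqP ->.
    - by exists [::].
    - exists [:: 1]; split => /=; first lia.
      by rewrite -/(A1 n) d1_s //; lia.
    - exists [:: 1; 1]; split => /=; first lia.
      by rewrite -/(A1 n) d1_s ?d1_Q //; try lia; left.
  case=> w [hw ->].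
  apply: (@foldl_closed _ n _ _ _ w _ hw); last by rewrite !inE eqxx.
  move=> I a ha; rewrite -/(A1 n) !inE => /orP[/orP[]|] /eqP ->.
  - by rewrite d1_s // eqxx orbT.
  - by rewrite d1_Q ?eqxx ?orbT //; left.
  - by rewrite d1_Q ?eqxx ?orbT //; right.
have -> : [set init_s n; QQ n; QF n] = init_s n |: [set QQ n; QF n] by apply/setP => X; rewrite !inE orbA.
rewrite cardsU1 cards2 !inE.
have -> : (init_s n == QQ n) = false by apply/eqP => e; move: s_in; rewrite e (negbTE s_nQ).
have -> : (init_s n == QF n) = false by apply/eqP => e; move: s_in; rewrite e (negbTE s_nF).
have -> : QQ n != QF n by apply/eqP => e; move: f_F; rewrite -e (negbTE f_nQ).
by [].
Qed.

Definition s0 n : 'I_n.+2 := inord 0.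
Definition RR n j : {set 'I_n.+2} := [set q : 'I_n.+2 | j <= q <= n].
Definition swapimg n a (X : {set 'I_n.+2}) : {set 'I_n.+2} :=
  [set q : 'I_n.+2 | (1 <= q <= n) && [exists p in X, nat_of_ord p == swap a q]].
Definition good n (X : {set 'I_n.+2}) := (X \subset QQ n) && (X != set0).

Lemma d2_f n a : 1 <= a <= n -> delta (A2 n) (init_f n) a = RR n a.
Proof.
move=> ha; apply/setP => q; rewrite mem_delta2 inE.
apply/existsP/idP => [[p /andP[/set1P -> h]]|h].
  by move: h; rewrite /trans /st_f inordK // /swap; do ! case: ifP; lia.
exists (inord n.+1); rewrite /init_f /st_f inE eqxx /trans inordK //= /swap.
by do ! case: ifP; lia.
Qed.

Lemma d2_gen n a (P : {set 'I_n.+2}) : 1 <= a <= n -> inord n.+1 \notin P ->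
  [exists p in P, 1 <= p <= n] -> delta (A2 n) P a = s0 n |: swapimg a P.
Proof.
move=> ha hf /existsP[p0 /andP[hp0 r0]]; apply/setP => q; rewrite mem_delta2 !inE eq_inord //.
apply/existsP/idP => [[p /andP[hp h]] | ].
  have hpn : nat_of_ord p != n.+1.
    apply/eqP => e; have e' : p = inord n.+1 by apply: val_inj; rewrite /= inordK.
    by move: hf; rewrite -e' hp.
  have : (nat_of_ord q == 0) || ((1 <= q <= n) && (nat_of_ord p == swap a q)).
    by move: h; rewrite /trans; lia.
  case/orP => [-> // | /andP[hq hs]]; rewrite hq /=; apply/orP; right.
  by apply/existsP; exists p; rewrite hp.
case/orP => [hq0 | /andP[hq /existsP[p /andP[hp hs]]]].
  by exists p0; rewrite hp0 /trans; lia.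
by exists p; rewrite hp /trans; lia.
Qed.

Lemma swapimg_s0 n a (X : {set 'I_n.+2}) : 1 <= a <= n -> swapimg a (s0 n |: X) = swapimg a X.
Proof.
move=> ha; apply/setP => q; rewrite !inE; case h: (1 <= q <= n) => //=.
apply: eq_existsb => p; rewrite !inE eq_inord //.
have := @swap_rng n a q ha h; case: (p \in X) => /=; lia.
Qed.

Lemma mem_swapimg n a (X : {set 'I_n.+2}) k : 1 <= a <= n -> 1 <= k <= n ->
  (inord k \in swapimg a X) = (inord (swap a k) \in X).
Proof.
move=> ha hk; have := @swap_rng n a k ha hk => hs.
by rewrite inE inordK ?hk /= ?ex_val //; lia.
Qed.

Lemma good_swap n a (X : {set 'I_n.+2}) : 1 <= a <= n -> good X -> good (swapimg a X).
Proof.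
move=> ha /andP[hsub /set0Pn[p hp]]; apply/andP; split.
  by apply/subsetP => q; rewrite !inE => /andP[].
have hpr : 1 <= p <= n by move/subsetP: hsub => /(_ p hp); rewrite inE.
have hs := @swap_rng n a p ha hpr.
apply/set0Pn; exists (inord (swap a p)).
by rewrite mem_swapimg // swapK inord_val.
Qed.

Lemma good_ex n (X : {set 'I_n.+2}) : good X -> [exists p in X, 1 <= p <= n].
Proof.
case/andP => hsub /set0Pn[p hp]; apply/existsP; exists p.
by rewrite hp; move/subsetP: hsub => /(_ p hp); rewrite inE.
Qed.

Lemma good_nf n (X : {set 'I_n.+2}) : good X -> (inord n.+1 : 'I_n.+2) \notin X.
Proof.
case/andP => /subsetP hsub _; apply/negP => /hsub; rewrite inE inordK //; lia.
Qed.

Lemma d2_good n a (X : {set 'I_n.+2}) : 1 <= a <= n -> good X -> delta (A2 n) X a = s0 n |: swapimg a X.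
Proof. by move=> ha hg; rewrite d2_gen ?good_ex ?good_nf. Qed.

Lemma d2_good0 n a (X : {set 'I_n.+2}) : 1 <= a <= n -> good X ->
  delta (A2 n) (s0 n |: X) a = s0 n |: swapimg a X.
Proof.
move=> ha hg; rewrite d2_gen ?swapimg_s0 //.
  by rewrite !inE eq_inord // inordK //= good_nf.
case/existsP: (good_ex hg) => p /andP[hp r]; apply/existsP; exists p.
by rewrite !inE hp orbT.
Qed.

Lemma good_RR n j : 1 <= j <= n -> good (RR n j).
Proof.
move=> hj; apply/andP; split.
  by apply/subsetP => q; rewrite !inE; lia.
by apply/set0Pn; exists (inord j); rewrite inE inordK //; lia.
Qed.

Lemma swapimg1 n (X : {set 'I_n.+2}) : X \subset QQ n -> swapimg 1 X = X.
Proof.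
move/subsetP=> hsub; apply/setP => q; rewrite inE.
have e : swap 1 q = q by rewrite /swap; do ! case: ifP; lia.
rewrite e ex_val // inord_val.
case hq: (q \in X); last by rewrite andbF.
by move: (hsub q hq); rewrite inE => ->.
Qed.

Lemma tau_nat n x y q : 1 <= x <= n -> 1 <= y <= n -> 1 <= q <= n -> x != y ->
  let u := if y == 1 then y else x in let v := if y == 1 then x else y in
  swap u (swap v (swap u q)) = if q == x then y else if q == y then x else q.
Proof. move=> h1 h2 h3 h4; cbv zeta; rewrite /swap; do ! case: ifP; lia. Qed.

Lemma acc_step m n A (I P : {set 'I_m}) a : accessible n A I P -> 1 <= a <= n ->
  accessible n A I (delta A P a).
Proof.
case=> w [hw ->] ha; exists (rcons w a); split; first by rewrite all_rcons ha.
by rewrite foldl_rcons.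
Qed.

Definition acc2 n (P : {set 'I_n.+2}) := accessible n (A2 n) (init_f n) P.

Lemma acc_RR n j : 1 <= j <= n -> acc2 (RR n j) /\ acc2 (s0 n |: RR n j).
Proof.
move=> hj; have h1 : acc2 (RR n j).
  by exists [:: j]; split; [rewrite /= hj | rewrite /= -/(A2 n) d2_f].
have h0 : 0 < 1 <= n by lia.
split => //; have := acc_step h1 h0.
rewrite d2_good ?good_RR ?swapimg1 //.
by apply/subsetP => q; rewrite !inE; lia.
Qed.

Lemma acc_move n (T : {set 'I_n.+2}) x y : good T -> x \in T -> y \in QQ n -> y \notin T ->
  acc2 (s0 n |: T) -> acc2 (s0 n |: (y |: (T :\ x))).
Proof.
move=> hg hx hy hyT hacc.
have hxr : 1 <= x <= n by case/andP: hg => /subsetP /(_ x hx); rewrite inE.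
have hyr : 1 <= y <= n by move: hy; rewrite inE.
have hxy : nat_of_ord x != nat_of_ord y by apply/eqP => /val_inj e; move: hyT; rewrite -e hx.
set u := if nat_of_ord y == 1 then nat_of_ord y else nat_of_ord x.
set v := if nat_of_ord y == 1 then nat_of_ord x else nat_of_ord y.
have hu : 1 <= u <= n by rewrite /u; case: ifP.
have hv : 1 <= v <= n by rewrite /v; case: ifP.
have g1 := good_swap hu hg.
have g2 := good_swap hv g1.
have a1 := acc_step hacc hu; rewrite d2_good0 // in a1.
have a2 := acc_step a1 hv; rewrite d2_good0 // in a2.
have a3 := acc_step a2 hu; rewrite d2_good0 // in a3.
suff -> : y |: (T :\ x) = swapimg u (swapimg v (swapimg u T)) by [].
apply/setP => q; case hq: (1 <= q <= n); last first.
  rewrite !inE hq /=; apply/negbTE; rewrite negb_or; apply/andP; split.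
    by apply/eqP => e; move: hq; rewrite e hyr.
  by apply/negP => /andP[_ /(subsetP (proj1 (andP hg)))]; rewrite inE hq.
have hs1 := @swap_rng n u q hu hq.
have hs2 := @swap_rng n v _ hv hs1.
rewrite -(inord_val q) !mem_swapimg //.
rewrite (@tau_nat n) // -/u -/v.
have E : forall a b : 'I_n.+2, (nat_of_ord a == nat_of_ord b) = (a == b).
  by move=> a b; apply: (inj_eq (@ord_inj _)).
rewrite !inE !E !inord_val; rewrite E in hxy.
case: (eqVneq q x) => [->|nqx].
  by rewrite (negbTE hxy) /= inord_val (negbTE hyT).
case: (eqVneq q y) => [->|nqy].
  by rewrite inord_val hx.
by rewrite inord_val.
Qed.

Definition mu n (T : {set 'I_n.+2}) := \sum_(q in T) (n - nat_of_ord q).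

Lemma mu_move n (T : {set 'I_n.+2}) x y : x \in T -> y \notin T ->
  mu (y |: (T :\ x)) + (n - x) = mu T + (n - y).
Proof.
move=> hx hy; rewrite /mu big_setU1 /=; last by rewrite !inE negb_and hy orbT.
by rewrite (big_setD1 x hx) /=; lia.
Qed.

Lemma top_or_move n (T : {set 'I_n.+2}) : good T ->
  (exists j, 1 <= j <= n /\ T = RR n j) \/
  (exists x y : 'I_n.+2, [/\ x \in T, y \notin T, x < y & y <= n]).
Proof.
move=> hg; case/andP: (hg) => /subsetP hsub /set0Pn[p0 hp0].
case: (boolP [exists x, exists y, [&& x \in T, y \notin T, x < y & y <= n]]).
  case/existsP => x /existsP[y /and4P[h1 h2 h3 h4]]; right; by exists x, y; split.
rewrite negb_exists => /forallP H; left.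
case: (arg_minnP (fun i : 'I_n.+2 => nat_of_ord i) hp0) => j hj hmin.
have hjr : 1 <= j <= n by move: (hsub j hj); rewrite inE.
exists j; split => //; apply/setP => q; rewrite inE.
apply/idP/idP => [hq | hq].
  by rewrite hmin //=; move: (hsub q hq); rewrite inE; lia.
case: (eqVneq q j) => [-> // | nqj].
move: (H j); rewrite negb_exists => /forallP /(_ q) h.
apply/negPn/negP => hqn; move/negP: h; apply; apply/and4P; split => //.
  have : nat_of_ord q != nat_of_ord j by [].
  lia.
lia.
Qed.

Lemma reach n (T : {set 'I_n.+2}) : good T -> acc2 (s0 n |: T).
Proof.
move: {2}(mu T) (leqnn (mu T)) => k; elim: k T => [|k IH] T hmu hg.
  case: (top_or_move hg) => [[j [hj ->]] | [x [y [hx hy hxy hyn]]]].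
    by case: (acc_RR hj).
  have := mu_move hx hy; lia.
case: (top_or_move hg) => [[j [hj ->]] | [x [y [hx hy hxy hyn]]]].
  by case: (acc_RR hj).
have hxr : 1 <= x <= n by case/andP: hg => /subsetP /(_ x hx); rewrite inE.
have hT'mu : mu (y |: (T :\ x)) <= k.
  have e := mu_move hx hy. have h2 : n - y < n - x by lia.
  move: e h2 hmu. set A := mu _. set B := mu _. clearbody A B. lia.
set T' := y |: (T :\ x).
have hyQ : y \in QQ n by rewrite inE; lia.
have gT' : good T'.
  apply/andP; split; last by apply/set0Pn; exists y; rewrite !inE eqxx.
  apply/subsetP => q; rewrite !inE => /orP[/eqP -> | /andP[_ hq]]; first lia.
  by case/andP: hg => /subsetP /(_ q hq); rewrite inE.
have aT' := IH T' hT'mu gT'.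
have hyT' : y \in T' by rewrite !inE eqxx.
have hxT' : x \notin T' by rewrite !inE eqxx /= orbF; apply/eqP => e; move: hy; rewrite -e hx.
have hxQ : x \in QQ n by rewrite inE.
have := acc_move gT' hyT' hxQ hxT' aT'.
suff -> : x |: (T' :\ y) = T by [].
apply/setP => q; rewrite !inE; case: (eqVneq q x) => [-> | nqx]; first by rewrite hx.
case: (eqVneq q y) => [-> | nqy] /=; first by rewrite (negbTE hy).
by [].
Qed.

Lemma inA3 n (T : {set 'I_n.+2}) : (T \in powerset (QQ n) :\ set0) = good T.
Proof. by rewrite !inE /good andbC. Qed.

Lemma s0_good n (T : {set 'I_n.+2}) : good T -> s0 n \notin T.
Proof.
case/andP => /subsetP hsub _; apply/negP => /hsub; rewrite inE inordK //.
Qed.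

Lemma part2 n : 0 < n ->
  num_det_states n (reverse_trans (underlying (Delta n))) (init_f n) (2 ^ n + n).
Proof.
move=> hn.
pose S1 : {set {set 'I_n.+2}} := [set init_f n].
pose S2 : {set {set 'I_n.+2}} := [set RR n (nat_of_ord j) | j in QQ n].
pose S3 : {set {set 'I_n.+2}} := [set s0 n |: T | T in powerset (QQ n) :\ set0].
exists (S1 :|: S2 :|: S3); split.
  move=> P; split.
    rewrite !inE => /orP[/orP[/eqP -> | /imsetP[j hj ->]] | /imsetP[T hT ->]].
    - by exists [::].
    - by rewrite inE in hj; case: (acc_RR hj).
    - by apply: reach; rewrite -inA3.
  case=> w [hw ->]; apply: (@foldl_closed _ n _ _ _ w _ hw); last by rewrite !inE eqxx.
  move=> I a ha; rewrite -/(A2 n) !inE => /orP[/orP[/eqP -> | /imsetP[j hj ->]] | /imsetP[T hT ->]].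
  - rewrite d2_f //; apply/orP; left; apply/orP; right; apply/imsetP.
    by exists (inord a); [rewrite inE inordK //; lia | rewrite inordK //; lia].
  - rewrite inE in hj; rewrite d2_good ?good_RR //; apply/orP; right; apply/imsetP.
    by exists (swapimg a (RR n j)) => //; rewrite inA3 good_swap ?good_RR.
  - rewrite inA3 in hT; rewrite d2_good0 //; apply/orP; right; apply/imsetP.
    by exists (swapimg a T) => //; rewrite inA3 good_swap.
have I12 : S1 :&: S2 = set0.
  apply/setP => X; rewrite !inE; apply/negbTE; apply/negP.
  case/andP => /eqP -> /imsetP[j hj e].
  have : (inord n.+1 : 'I_n.+2) \in init_f n by rewrite inE.
  by rewrite e inE inordK //; lia.
have I3 : (S1 :|: S2) :&: S3 = set0.
  apply/setP => X; rewrite !inE; apply/negbTE; apply/negP.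
  case/andP => /orP[/eqP -> | /imsetP[j hj ->]] /imsetP[T hT e].
    have : s0 n \in init_f n by rewrite e setU11.
    by rewrite inE eq_inord // inordK.
  have : s0 n \in RR n j by rewrite e setU11.
  by move: hj; rewrite !inE inordK //; lia.
rewrite cardsU I3 cards0 subn0 cardsU I12 cards0 subn0 cards1.
have -> : #|S2| = n.
  rewrite card_in_imset ?card_QQ //.
  move=> j1 j2 h1 h2 e; apply: val_inj; rewrite !inE in h1 h2.
  move: (e) => /setP /(_ j1); rewrite !inE leqnn /= => e1.
  move: (e) => /setP /(_ j2); rewrite !inE leqnn /= => e2.
  move: e1 e2; case: (j1 <= n) h1 => //; case: (j2 <= n) h2 => //=; lia.
have -> : #|S3| = 2 ^ n - 1.
  rewrite card_in_imset.
    have := cardsD1 set0 (powerset (QQ n)).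
    by rewrite card_powerset card_QQ powersetE sub0set /= => ->; rewrite addKn.
  move=> T1 T2; rewrite !inA3 => h1 h2 e; apply/setP => q.
  move/setP: e => /(_ q); rewrite !inE.
  case: (eqVneq q (s0 n)) => [-> | nq] //=.
  by rewrite (negbTE (s0_good h1)) (negbTE (s0_good h2)).
have := expn_gt0 2 n; lia.
Qed.

Theorem lemma11 (n : nat) (hn : 0 < n) :
  num_det_states n (underlying (Delta n)) (init_s n) 3 /\
  num_det_states n (reverse_trans (underlying (Delta n))) (init_f n) (2 ^ n + n).
Proof. by split; [apply: part1 | apply: part2]. Qed.
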